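(* Let $p$ be a prime and $R$ a commutative $\mathbb{Q}$-algebra. Let $c_1,c_2,\dots\in R$, and let $X(t)=\sum_{n\ge0}x_nt^n$ and $C(t)=\sum_{n\ge1}\frac{c_n}{n}t^n$ in $R[[t]]$ satisfy $X(t)=\exp(C(t))$; in particular $x_0=1$. Let $U(t)=\sum_{n\ge0}x_{pn}t^{pn}$ be the $p$-singular part and $V(t)=\sum_{p\nmid n}x_nt^n$ the $p$-regular part of $X$. Define $Y(t)=\sum_{n\ge0}y_nt^n=V(t)/U(t)$. Then: (1) $y_n=0$ whenever $p\mid n$; (2) for every $n$, $y_n$ is a polynomial with rational coefficients in the $c_i$ with $p\nmid i$; (3) for every $n\ge1$, $y_n-x_n$ is a $\mathbb{Z}$-linear combination of products $x_\lambda=x_{\lambda_1}x_{\lambda_2}\cdots x_{\lambda_r}$, where $\lambda=(\lambda_1,\dots,\lambda_r)$ runs over partitions of $n$ having at least one part divisible by $p$.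
   Context: For a formal power series $Z(t)=\sum_{n\ge0}z_nt^n$, its $p$-regular part is $\sum_{p\nmid n}z_nt^n$ (which contains no constant term) and its $p$-singular part is $\sum_{n\ge0}z_{pn}t^{pn}$. *)

(* Defs.v *)
(* Formal power series over R are represented by their
   coefficient sequences  nat -> R. *)
From HB Require Import structures.
From mathcomp Require Import all_boot all_order all_algebra.
Set Implicit Arguments. Unset Strict Implicit. Unset Printing Implicit Defensive.
Import Order.TTheory GRing.Theory Num.Theory.
Local Open Scope ring_scope.

Section PowerSeries.
Variable R : comUnitRingType.

Definition oneS : nat -> R := fun n => (n == 0%N)%:R.

Definition mulS (f g : nat -> R) : nat -> R :=
  fun n => \sum_(i < n.+1) f i * g (n - i)%N.

Definition powS (f : nat -> R) (k : nat) : nat -> R := iter k (mulS f) oneS.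

(* exp(C) = \sum_k C^k / k!  for a series C with zero constant term; the
   coefficient of t^n only receives contributions from k <= n. *)
Definition expS (C : nat -> R) : nat -> R :=
  fun n => \sum_(k < n.+1) (k`!%:R)^-1 * powS C k n.

Definition logseries (c : nat -> R) : nat -> R :=
  fun n => if n == 0%N then 0 else c n / n%:R.

Definition sing_part (p : nat) (Z : nat -> R) : nat -> R :=
  fun n => if (p %| n)%N then Z n else 0.

Definition reg_part (p : nat) (Z : nat -> R) : nat -> R :=
  fun n => if (p %| n)%N then 0 else Z n.
End PowerSeries.

(* Polynomial expressions with rational coefficients in variables c_i. *)
Inductive ratpolyexpr : Type :=
| QConst of rat
| QVar of nat
| QAdd of ratpolyexpr & ratpolyexpr
| QMul of ratpolyexpr & ratpolyexpr.

Fixpoint qvars_in (P : nat -> bool) (e : ratpolyexpr) : bool :=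
  match e with
  | QConst _ => true
  | QVar i => P i
  | QAdd a b => qvars_in P a && qvars_in P b
  | QMul a b => qvars_in P a && qvars_in P b
  end.

Fixpoint qeval (R : unitRingType) (c : nat -> R) (e : ratpolyexpr) : R :=
  match e with
  | QConst q => ratr q
  | QVar i => c i
  | QAdd a b => qeval c a + qeval c b
  | QMul a b => qeval c a * qeval c b
  end.

Definition is_partition (n : nat) (s : seq nat) : bool :=
  [&& all (fun k => 0 < k)%N s, sorted geq s & sumn s == n].

(* Main.v *)
Require Import Defs.
From HB Require Import structures.
From mathcomp Require Import all_boot all_order all_algebra.
From mathcomp Require Import zify.
From Stdlib Require Import FunctionalExtensionality Lia.
Import Order.TTheory GRing.Theory Num.Theory.
Set Implicit Arguments. Unset Strict Implicit. Unset Printing Implicit Defensive.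
Local Open Scope ring_scope.

Lemma mulS_poly (R : comUnitRingType) (f g : nat -> R) (P Q : {poly R}) n :
  (forall j, (j <= n)%N -> P`_j = f j) -> (forall j, (j <= n)%N -> Q`_j = g j) ->
  mulS f g n = (P * Q)`_n.
Proof.
move=> HP HQ; rewrite coefM /mulS; apply: eq_bigr => i _.
by rewrite HP ?HQ // ?leq_subr // -ltnS.
Qed.

Definition Tr (R : comUnitRingType) (f : nat -> R) n : {poly R} := \poly_(i < n.+1) f i.

Lemma Tr_coef (R : comUnitRingType) (f : nat -> R) n j : (j <= n)%N -> (Tr f n)`_j = f j.
Proof. by move=> H; rewrite coef_poly ltnS H. Qed.

Lemma mulSC (R : comUnitRingType) (f g : nat -> R) : mulS f g = mulS g f.
Proof.
apply: functional_extensionality => n.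
rewrite (mulS_poly (P := Tr f n) (Q := Tr g n)) => [||j]; last 2 first.
- exact: Tr_coef. - exact: Tr_coef.
rewrite mulrC; apply/esym/mulS_poly => j Hj; exact: Tr_coef.
Qed.

Lemma mulSA (R : comUnitRingType) (f g h : nat -> R) :
  mulS f (mulS g h) = mulS (mulS f g) h.
Proof.
apply: functional_extensionality => n.
have E1 : forall j, (j <= n)%N -> (Tr g n * Tr h n)`_j = mulS g h j.
  move=> j Hj; symmetry; apply: mulS_poly => k Hk; apply: Tr_coef; exact: leq_trans Hj.
have E2 : forall j, (j <= n)%N -> (Tr f n * Tr g n)`_j = mulS f g j.
  move=> j Hj; symmetry; apply: mulS_poly => k Hk; apply: Tr_coef; exact: leq_trans Hj.
rewrite (mulS_poly (P := Tr f n) (Q := Tr g n * Tr h n)); last exact: E1; last exact: Tr_coef.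
rewrite (mulS_poly (P := Tr f n * Tr g n) (Q := Tr h n) (f := mulS f g)); last exact: Tr_coef; last exact: E2.
by rewrite mulrA.
Qed.

Lemma mulSDl (R : comUnitRingType) (f g h : nat -> R) :
  mulS (fun n => f n + g n) h = fun n => mulS f h n + mulS g h n.
Proof.
apply: functional_extensionality => n; rewrite /mulS -big_split /=.
by apply: eq_bigr => i _; rewrite mulrDl.
Qed.

Lemma mulSZl (R : comUnitRingType) (a : R) (f g : nat -> R) :
  mulS (fun n => a * f n) g = fun n => a * mulS f g n.
Proof.
apply: functional_extensionality => n; rewrite /mulS mulr_sumr.
by apply: eq_bigr => i _; rewrite mulrA.
Qed.

Lemma mulS0l (R : comUnitRingType) (g : nat -> R) : mulS (fun _ => 0) g = fun _ => 0.
Proof.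
apply: functional_extensionality => n; rewrite /mulS big1 // => i _; exact: mul0r.
Qed.
Definition DS (R : comUnitRingType) (f : nat -> R) : nat -> R := fun n => n%:R * f n.

Lemma DS_mul (R : comUnitRingType) (f g : nat -> R) :
  DS (mulS f g) = fun n => mulS (DS f) g n + mulS f (DS g) n.
Proof.
apply: functional_extensionality => n; rewrite /DS /mulS mulr_sumr -big_split /=.
apply: eq_bigr => i _.
have Hi : (i <= n)%N by rewrite -ltnS.
rewrite -{1}(subnKC Hi) natrD.
rewrite mulrDl; congr (_ + _); first by rewrite !mulrA.
by rewrite mulrCA.
Qed.

Lemma powS_low (R : comUnitRingType) (C : nat -> R) : C 0%N = 0 ->
  forall k m, (m < k)%N -> powS C k m = 0.
Proof.
move=> C0; elim=> [|k IH] m //= Hm.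
rewrite /mulS big1 // => i _.
case: i => [[|i'] Hi] /=; first by rewrite C0 mul0r.
rewrite IH ?mulr0 //; lia.
Qed.

Lemma powS_S (R : comUnitRingType) (C : nat -> R) k : powS C k.+1 = mulS C (powS C k).
Proof. by []. Qed.

Lemma DS_oneS (R : comUnitRingType) : DS (oneS R) = fun _ => 0.
Proof.
by apply: functional_extensionality => n; rewrite /DS /oneS; case: n => [|n]; rewrite ?mul0r ?mulr0.
Qed.

Lemma DS_powS (R : comUnitRingType) (C : nat -> R) k :
  DS (powS C k) = fun n => k%:R * mulS (DS C) (powS C k.-1) n.
Proof.
elim: k => [|k IH].
  by rewrite DS_oneS; apply: functional_extensionality => n; rewrite mul0r.
rewrite powS_S DS_mul IH (mulSC C) mulSZl.
case: k IH => [|k] IH.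
  apply: functional_extensionality => n.
  by rewrite mul0r addr0 mul1r.
apply: functional_extensionality => n /=.
rewrite -mulSA (mulSC _ C) -powS_S.
by rewrite -[k.+2]addn1 natrD mulrDl mul1r addrC.
Qed.

Lemma sum_ext (R : comUnitRingType) (F : nat -> R) m M : (m <= M)%N ->
  (forall k, (m <= k)%N -> F k = 0) -> \sum_(k < M) F k = \sum_(k < m) F k.
Proof.
move=> H HF; rewrite (big_ord_widen _ F H) [LHS](bigID (fun k : 'I_M => (k < m)%N)) /=.
rewrite [X in _ + X]big1 ?addr0 // => k; rewrite -leqNgt; exact: HF.
Qed.

Lemma natr_unit (R : comUnitRingType) :
  (forall n : nat, (n.+1)%:R \is a @GRing.unit R) -> forall m, (0 < m)%N -> m%:R \is a @GRing.unit R.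
Proof. by move=> hu [|m]. Qed.

Lemma fact_inv (R : comUnitRingType) :
  (forall n : nat, (n.+1)%:R \is a @GRing.unit R) -> forall i,
  ((i.+1)`!%:R)^-1 * (i.+1)%:R = (i`!%:R)^-1 :> R.
Proof.
move=> hu i; rewrite factS natrM invrM ?hu //; last exact: natr_unit (fact_gt0 _).
by rewrite -mulrA mulVr ?mulr1 ?hu.
Qed.

Lemma expS_ode (R : comUnitRingType) (C : nat -> R) :
  (forall n : nat, (n.+1)%:R \is a @GRing.unit R) -> C 0%N = 0 ->
  DS (expS C) = mulS (DS C) (expS C).
Proof.
move=> hu C0; apply: functional_extensionality => n.
have L : DS (expS C) n = \sum_(k < n) (k`!%:R)^-1 * mulS (DS C) (powS C k) n.
  rewrite {1}/DS /expS mulr_sumr big_ord_recl.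
  rewrite [X in X + _](_ : _ = 0); last first.
    by rewrite /= /oneS; case: n => [|n]; rewrite ?mul0r ?mulr0.
  rewrite add0r; apply: eq_bigr => i _.
  have := congr1 (fun f => f n) (DS_powS C (bump 0 i)); rewrite {1}/DS => E.
  rewrite mulrCA E /bump /= add1n mulrA fact_inv //.
rewrite L /mulS /expS.
transitivity (\sum_(i < n.+1) \sum_(k < n) DS C i * ((k`!%:R)^-1 * powS C k (n - i))).
  rewrite exchange_big /=; apply: eq_bigr => k _; rewrite mulr_sumr.
  by apply: eq_bigr => i _; rewrite mulrCA.
apply: eq_bigr => i _; rewrite -mulr_sumr.
case: i => [[|i] Hi] /=; first by rewrite /DS !mul0r.
congr (_ * _); have := @sum_ext R (fun k => (k`!%:R)^-1 * powS C k (n - i.+1)) (n - i.+1).+1 n. move=> HH; rewrite HH //; first lia.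
move=> k Hk; rewrite (powS_low C0) ?mulr0 //; lia.
Qed.

Lemma ode_uniq (R : comUnitRingType) (A F G : nat -> R) :
  (forall n : nat, (n.+1)%:R \is a @GRing.unit R) -> A 0%N = 0 -> F 0%N = G 0%N ->
  DS F = mulS A F -> DS G = mulS A G -> forall n, F n = G n.
Proof.
move=> hu A0 FG0 HF HG; elim/ltn_ind => n IH.
case: n IH => [|n] IH; first exact: FG0.
have EF := congr1 (fun f => f n.+1) HF; have EG := congr1 (fun f => f n.+1) HG.
rewrite /DS /= in EF EG.
apply: (mulrI (hu n)); rewrite EF EG /mulS big_ord_recl [RHS]big_ord_recl A0 !mul0r !add0r.
apply: eq_bigr => i _; rewrite IH // lift0 subSS ltnS leq_subr //.
Qed.

Lemma expS0 (R : comUnitRingType) (C : nat -> R) : expS C 0%N = 1.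
Proof. by rewrite /expS big_ord1 /= invr1 mul1r. Qed.

Lemma mulS0 (R : comUnitRingType) (f g : nat -> R) : mulS f g 0%N = f 0%N * g 0%N.
Proof. by rewrite /mulS big_ord1. Qed.

Lemma DS_add (R : comUnitRingType) (A B : nat -> R) :
  DS (fun n => A n + B n) = fun n => DS A n + DS B n.
Proof. by apply: functional_extensionality => n; rewrite /DS mulrDr. Qed.

Lemma exp_add (R : comUnitRingType) (A B : nat -> R) :
  (forall n : nat, (n.+1)%:R \is a @GRing.unit R) -> A 0%N = 0 -> B 0%N = 0 ->
  forall n, expS (fun n => A n + B n) n = mulS (expS A) (expS B) n.
Proof.
move=> hu A0 B0; apply: (ode_uniq (A := DS (fun n => A n + B n))) => //.
- by rewrite /DS mul0r.
- by rewrite expS0 mulS0 !expS0 mulr1.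
- by apply: expS_ode => //; rewrite A0 B0 addr0.
rewrite DS_mul !expS_ode // DS_add mulSDl -!mulSA (mulSA (expS A) (DS B)) (mulSC (expS A) (DS B)) -mulSA.
by [].
Qed.

Definition singS (R : comUnitRingType) p (S : nat -> R) := forall n, ~~ (p %| n)%N -> S n = 0.

Lemma dv_sub p n i : (i <= n)%N -> (p %| n - i)%N -> (p %| n)%N = (p %| i)%N.
Proof. by move=> H1 H2; rewrite -{1}(subnK H1) dvdn_addr. Qed.

Lemma singS_mul (R : comUnitRingType) p (A B : nat -> R) :
  singS p A -> singS p B -> singS p (mulS A B).
Proof.
move=> HA HB n pn; rewrite /mulS big1 // => i _.
have Hi : (i <= n)%N by rewrite -ltnS.
case pi: (p %| i)%N; last by rewrite HA ?pi ?mul0r.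
rewrite HB ?mulr0 //; apply/negP => H; move: pn; by rewrite (dv_sub Hi H) pi.
Qed.

Lemma singS_pow (R : comUnitRingType) p (C : nat -> R) k :
  singS p C -> singS p (powS C k).
Proof.
move=> HC; elim: k => [|k IH].
  by move=> [|n] H; [rewrite dvdn0 in H | rewrite /oneS].
exact: singS_mul.
Qed.

Lemma singS_exp (R : comUnitRingType) p (C : nat -> R) :
  singS p C -> singS p (expS C).
Proof.
move=> HC n pn; rewrite /expS big1 // => k _; by rewrite (singS_pow k HC) ?mulr0.
Qed.

Lemma sing_mul (R : comUnitRingType) p (A S : nat -> R) :
  singS p S -> sing_part p (mulS A S) = mulS (sing_part p A) S.
Proof.
move=> HS; apply: functional_extensionality => n; rewrite /sing_part /mulS.
case pn: (p %| n)%N.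
  apply: eq_bigr => i _; case pi: (p %| i)%N => //.
  have Hi : (i <= n)%N by rewrite -ltnS.
  rewrite HS ?mulr0 //; apply/negP => H; move: pi; by rewrite -(dv_sub Hi H) pn.
symmetry; apply: big1 => i _; case pi: (p %| i)%N; last by rewrite mul0r.
have Hi : (i <= n)%N by rewrite -ltnS.
rewrite HS ?mulr0 //; apply/negP => H; move: pn; by rewrite (dv_sub Hi H) pi.
Qed.

Lemma reg_mul (R : comUnitRingType) p (A S : nat -> R) :
  singS p S -> reg_part p (mulS A S) = mulS (reg_part p A) S.
Proof.
move=> HS; apply: functional_extensionality => n; rewrite /reg_part /mulS.
case pn: (p %| n)%N.
  symmetry; apply: big1 => i _; case pi: (p %| i)%N; first by rewrite mul0r.
  have Hi : (i <= n)%N by rewrite -ltnS.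
  rewrite HS ?mulr0 //; apply/negP => H; move: pi; by rewrite -(dv_sub Hi H) pn.
apply: eq_bigr => i _; case pi: (p %| i)%N => //.
have Hi : (i <= n)%N by rewrite -ltnS.
rewrite HS ?mulr0 //; apply/negP => H; move: pn; by rewrite (dv_sub Hi H) pi.
Qed.

Lemma mulS_rec (R : comUnitRingType) (Y U : nat -> R) n :
  U 0%N = 1 -> mulS Y U n = Y n + \sum_(i < n) Y i * U (n - i)%N.
Proof.
move=> U0; rewrite /mulS big_ord_recr /= subnn U0 mulr1 addrC.
congr (_ + _); apply: eq_bigr => i _ //.
Qed.

Lemma cancelS (R : comUnitRingType) (W Z S : nat -> R) :
  S 0%N = 1 -> (forall n, mulS W S n = mulS Z S n) -> forall n, W n = Z n.
Proof.
move=> S0 H; elim/ltn_ind => n IH.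
have := H n; rewrite !mulS_rec //.
have -> : \sum_(i < n) W i * S (n - i)%N = \sum_(i < n) Z i * S (n - i)%N.
  by apply: eq_bigr => i _; rewrite IH.
exact: addIr.
Qed.

Definition Comb (R : comUnitRingType) p (X : nat -> R) n (r : R) :=
  exists l : seq (int * seq nat),
    all (fun pr => is_partition n pr.2 && has (fun k => (p %| k)%N) pr.2) l
    /\ r = \sum_(pr <- l) (\prod_(i <- pr.2) X i) *~ pr.1.

Lemma comb0 (R : comUnitRingType) p (X : nat -> R) n : Comb p X n 0.
Proof. by exists [::]; rewrite big_nil. Qed.

Lemma combD (R : comUnitRingType) p (X : nat -> R) n a b :
  Comb p X n a -> Comb p X n b -> Comb p X n (a + b).
Proof.
move=> [l1 [H1 ->]] [l2 [H2 ->]]; exists (l1 ++ l2).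
by rewrite all_cat H1 H2 big_cat.
Qed.

Lemma combN (R : comUnitRingType) p (X : nat -> R) n a :
  Comb p X n a -> Comb p X n (- a).
Proof.
move=> [l [H ->]]; exists (map (fun pr => (- pr.1, pr.2)) l); split.
  by rewrite all_map.
rewrite big_map -sumrN; apply: eq_bigr => pr _ /=; by rewrite mulrNz.
Qed.

Lemma combM (R : comUnitRingType) p (X : nat -> R) n m a :
  (0 < m)%N -> Comb p X n a -> Comb p X (n + m) (a * X m).
Proof.
move=> m0 [l [H ->]]; exists (map (fun pr => (pr.1, sort geq (m :: pr.2))) l); split.
  rewrite all_map; apply/allP => pr Hpr /=.
  move/allP: H => /(_ pr Hpr) /andP [/and3P [Hpos Hsort Hsum] Hhas].
  have Pe : perm_eq (sort geq (m :: pr.2)) (m :: pr.2) by rewrite perm_sort.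
  rewrite /is_partition (perm_all _ Pe) (perm_sumn Pe) (perm_has _ Pe) /=.
  rewrite m0 /= (eqP Hsum) addnC eqxx andbT.
  apply/andP; split; last by apply/orP; right.
  apply/andP; split => //; apply: sort_sorted => x y; exact: leq_total.
rewrite big_map mulr_suml; apply: eq_bigr => pr _ /=.
rewrite mulrzAl; congr (_ *~ _).
have Pe : perm_eq (sort geq (m :: pr.2)) (m :: pr.2) by rewrite perm_sort.
by rewrite (perm_big _ Pe) big_cons mulrC.
Qed.

Lemma combX (R : comUnitRingType) p (X : nat -> R) m :
  (0 < m)%N -> (p %| m)%N -> Comb p X m (X m).
Proof.
move=> m0 pm; exists [:: (1%Z, [:: m])]; split.
  by rewrite /= /is_partition /= m0 pm addn0 eqxx.
by rewrite big_seq1 /= big_seq1.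
Qed.

Lemma comb_sum (R : comUnitRingType) p (X : nat -> R) n M (F : 'I_M -> R) :
  (forall i, Comb p X n (F i)) -> Comb p X n (\sum_(i < M) F i).
Proof.
move=> H; apply: (big_ind (Comb p X n)) => //; [exact: comb0 | exact: combD].
Qed.

Definition PolyE (R : comUnitRingType) p (c : nat -> R) (r : R) :=
  exists e : ratpolyexpr, qvars_in (fun i => ~~ (p %| i)%N) e /\ r = qeval c e.

Lemma polyC (R : comUnitRingType) p (c : nat -> R) q : PolyE p c (ratr q).
Proof. by exists (QConst q). Qed.

Lemma polyD (R : comUnitRingType) p (c : nat -> R) a b :
  PolyE p c a -> PolyE p c b -> PolyE p c (a + b).
Proof. by move=> [e1 [H1 ->]] [e2 [H2 ->]]; exists (QAdd e1 e2); rewrite /= H1 H2. Qed.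

Lemma polyM (R : comUnitRingType) p (c : nat -> R) a b :
  PolyE p c a -> PolyE p c b -> PolyE p c (a * b).
Proof. by move=> [e1 [H1 ->]] [e2 [H2 ->]]; exists (QMul e1 e2); rewrite /= H1 H2. Qed.

Lemma polyNat (R : comUnitRingType) p (c : nat -> R) k : PolyE p c k%:R.
Proof. by rewrite -ratr_nat; apply: polyC. Qed.

Lemma polyN (R : comUnitRingType) p (c : nat -> R) a :
  PolyE p c a -> PolyE p c (- a).
Proof.
move=> H; rewrite -mulN1r; apply: polyM => //.
have -> : (-1 : R) = ratr ((-1)%:~R) by rewrite ratr_int.
exact: polyC.
Qed.

Lemma polyV (R : comUnitRingType) p (c : nat -> R) k : (0 < k)%N ->
  PolyE p c (k%:R)^-1.
Proof.
move=> k0.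
have -> : (k%:R)^-1 = ratr ((1%:~R / (Posz k)%:~R) : rat) :> R.
  rewrite /ratr coprimeq_num ?coprime1n // coprimeq_den ?coprime1n //.
  have -> : (Posz k == 0) = false by case: k k0.
  by rewrite gtr0_sg ?ltz_nat // mulr1 mul1r.
exact: polyC.
Qed.

Lemma poly_sum (R : comUnitRingType) p (c : nat -> R) M (F : 'I_M -> R) :
  (forall i, PolyE p c (F i)) -> PolyE p c (\sum_(i < M) F i).
Proof.
move=> H; apply: (big_ind (PolyE p c)) => //; last exact: polyD.
exact: (polyNat p c 0).
Qed.

Lemma poly0 (R : comUnitRingType) p (c : nat -> R) : PolyE p c 0.
Proof. exact: (polyNat p c 0). Qed.

Theorem mainTheorem3 (p : nat) (R : comUnitRingType) (c X Y : nat -> R) :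
  prime p ->
  (* R is a Q-algebra: every positive integer is invertible in R *)
  (forall n : nat, (n.+1)%:R \is a @GRing.unit R) ->
  (* X(t) = exp(C(t)),  C(t) = \sum_{n>=1} c_n/n t^n *)
  (forall n, X n = expS (logseries c) n) ->
  (* Y(t) = V(t)/U(t), i.e. Y(t) U(t) = V(t) (U is invertible since x_0 = 1) *)
  (forall n, mulS Y (sing_part p X) n = reg_part p X n) ->
  [/\ (forall n, (p %| n)%N -> Y n = 0),
      (forall n, exists e : ratpolyexpr,
          qvars_in (fun i => ~~ (p %| i)%N) e /\ Y n = qeval c e)
    & (forall n, (0 < n)%N ->
         exists l : seq (int * seq nat),
           all (fun pr => is_partition n pr.2 && has (fun k => (p %| k)%N) pr.2) l
           /\ Y n - X n = \sum_(pr <- l) (\prod_(i <- pr.2) X i) *~ pr.1)].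
Proof.
move=> pp hu HX HY.
have X0 : X 0%N = 1 by rewrite HX expS0.
set U := sing_part p X.
have U0 : U 0%N = 1 by rewrite /U /sing_part dvdn0.
have recY : forall n, Y n = reg_part p X n - \sum_(i < n) Y i * U (n - i)%N.
  by move=> n; rewrite -HY mulS_rec // addrK.
have part1 : forall n, (p %| n)%N -> Y n = 0.
  elim/ltn_ind => n IH pn; rewrite recY /reg_part pn sub0r big1 ?oppr0 // => i _.
  rewrite /U /sing_part; case: ifP => H; last by rewrite mulr0.
  have Hi : (i <= n)%N by apply: ltnW.
  by rewrite IH ?mul0r // -(dv_sub Hi H).
split.
- exact: part1.
- pose c1 := fun i => if (p %| i)%N then 0 else c i.
  pose c2 := fun i => if (p %| i)%N then c i else 0.
  pose Cr := logseries c1; pose Cs := logseries c2.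
  have Hsplit : logseries c = fun n => Cr n + Cs n.
    apply: functional_extensionality => n; rewrite /Cr /Cs /logseries /c1 /c2.
    case: (n == 0%N); first by rewrite addr0.
    by case: (p %| n)%N; rewrite mul0r ?add0r ?addr0.
  have Cr0 : Cr 0%N = 0 by rewrite /Cr /logseries eqxx.
  have Cs0 : Cs 0%N = 0 by rewrite /Cs /logseries eqxx.
  pose X' := expS Cr; pose S := expS Cs.
  have Xeq : X = mulS X' S.
    by apply: functional_extensionality => n; rewrite HX Hsplit exp_add.
  have sCs : singS p Cs.
    move=> n pn; rewrite /Cs /logseries /c2 (negbTE pn) mul0r; by case: (n == 0%N).
  have sS : singS p S by apply: singS_exp.
  have S0 : S 0%N = 1 by rewrite /S expS0.
  have key : forall n, mulS Y (sing_part p X') n = reg_part p X' n.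
    apply: (cancelS S0) => n.
    by rewrite -mulSA -(sing_mul X' sS) -Xeq HY Xeq reg_mul.
  have polyCr : forall n, PolyE p c (Cr n).
    move=> n; rewrite /Cr /logseries; case: ifP => n0; first exact: poly0.
    apply: polyM; last by apply: polyV; rewrite lt0n n0.
    rewrite /c1; case: ifP => pn; first exact: poly0.
    by exists (QVar n); rewrite /= pn.
  have polyPow : forall k n, PolyE p c (powS Cr k n).
    elim=> [|k IH] n; first exact: polyNat.
    by rewrite powS_S /mulS; apply: poly_sum => i; apply: polyM.
  have polyX' : forall n, PolyE p c (X' n).
    move=> n; rewrite /X' /expS; apply: poly_sum => k; apply: polyM => //.
    exact: polyV (fact_gt0 _).
  have sX0 : sing_part p X' 0%N = 1 by rewrite /sing_part dvdn0 /X' expS0.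
  suff : forall n, PolyE p c (Y n) by [].
  elim/ltn_ind => n IH.
  have := key n; rewrite mulS_rec // => E.
  have -> : Y n = reg_part p X' n - \sum_(i < n) Y i * sing_part p X' (n - i)%N.
    by rewrite -E addrK.
  apply: polyD; first by rewrite /reg_part; case: ifP => _; [exact: poly0 | exact: polyX'].
  apply: polyN; apply: poly_sum => i; apply: polyM; first exact: IH.
  by rewrite /sing_part; case: ifP => _; [exact: polyX' | exact: poly0].
- suff : forall n, (0 < n)%N -> Comb p X n (Y n - X n) by [].
  elim/ltn_ind => n IH n0.
  case pn: (p %| n)%N.
    by rewrite part1 // sub0r; apply: combN; exact: combX.
  rewrite recY /reg_part pn addrAC subrr add0r.
  apply: combN; apply: comb_sum => i.
  rewrite /U /sing_part; case: ifP => H; last by rewrite mulr0; exact: comb0.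
  case: i H => [[|i] Hi] H /=.
    by rewrite part1 ?dvdn0 // mul0r; exact: comb0.
  have -> : Y i.+1 * X (n - i.+1)%N =
      (Y i.+1 - X i.+1) * X (n - i.+1)%N + X (n - i.+1)%N * X i.+1.
    by rewrite mulrBl [X _ * X i.+1]mulrC subrK.
  have np : (0 < n - i.+1)%N by lia.
  apply: combD.
    have := combM np (IH i.+1 Hi (ltn0Sn _)).
    by rewrite (_ : (i.+1 + (n - i.+1))%N = n) //; lia.
  have := combM (ltn0Sn i) (combX X np H).
  by rewrite (_ : (n - i.+1 + i.+1)%N = n) //; lia.
Qed.
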